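(* Let $p\ge1$ and let $m(z,w)$, $m'(z,w)$ be monomials (coefficient 1) of degree $p$ in $z_i,\bar z_i,w_j,\bar w_j$ such that $\bar z_1m$ and $\bar w_1m'$ are invariant under all translations $T_{a,b}$. Put $f(z,w)=m(z,w)+m(\gamma_3(z,w))$ and $h(z,w)=m'(z,w)$. Then there exists a single function $P:A(\kappa)^{p+1}\to\mathbb C$ which is $O(2)$-invariant ($P(\gamma k,\gamma k_1,\dots,\gamma k_p)=P(k,k_1,\dots,k_p)$ for all $\gamma\in O(2)$) and satisfies $P(k,k_1,\dots,k_p)=0$ whenever $k\ne k_1+\dots+k_p$, such that for all $(z,w)$ $$f(z,w)=\sum_{k_1,\dots,k_p\in\tilde A}a(k_1)\cdots a(k_p)P(q_1,k_1,\dots,k_p),\qquad h(z,w)=\sum_{k_1,\dots,k_p\in\tilde A}a(k_1)\cdots a(k_p)P(p_1,k_1,\dots,k_p),$$ if and only if $f(z_1,z_2,0,w_2,w_3,0)=h(w_2,w_3,z_1,0,0,\bar z_2)$ for all $z_1,z_2,w_2,w_3$.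
   Context: Integers $l_1>l_2>n_2>0$ with $\kappa^2=l_1^2=l_2^2+n_2^2$; $A(\kappa)=\{k\in\mathbb R^2:|k|=\kappa\}$. Wave vectors $q_1=(l_1,0)$, $q_2=(0,l_1)$, $p_1=(l_2,n_2)$, $p_2=(l_2,-n_2)$, $p_3=(n_2,l_2)$, $p_4=(n_2,-l_2)$, $\tilde A=\{\pm q_i,\pm p_j\}$. For $(z,w)=(z_1,z_2,w_1,\dots,w_4)\in\mathbb C^6$, $a:\tilde A\to\mathbb C$ is defined by $a(q_i)=z_i$, $a(-q_i)=\bar z_i$, $a(p_j)=w_j$, $a(-p_j)=\bar w_j$. Translations: $T_{a,b}(z,w)=(e^{-il_1a}z_1,e^{-il_1b}z_2,e^{-i(l_2a+n_2b)}w_1,e^{-i(l_2a-n_2b)}w_2,e^{-i(n_2a+l_2b)}w_3,e^{-i(n_2a-l_2b)}w_4)$. $\gamma_3(z,w)=(z_1,\bar z_2,w_2,w_1,w_4,w_3)$. *)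

(* Defs.v *)
From HB Require Import structures.
From mathcomp Require Import all_boot all_order all_algebra.
From mathcomp Require Import reals trigo.
From mathcomp Require Export complex.
Set Implicit Arguments. Unset Strict Implicit. Unset Printing Implicit Defensive.
Import Order.TTheory GRing.Theory Num.Theory.
Local Open Scope ring_scope.

Section Defs.
Variable R : realType.
Local Notation C := (complex R).

Definition expi (t : R) : C := (cos t +i* sin t)%C.

Definition pt (x y : R) : 'rV[R]_2 := \row_(i < 2) (if i == 0 :> nat then x else y).

Definition onA (kappa : R) (k : 'rV[R]_2) : Prop :=
  Num.sqrt (k 0 0 ^+ 2 + k 0 1 ^+ 2) = kappa.

(* O(2) acting on row vectors by k |-> k *m g. *)
Definition orth2 (g : 'M[R]_2) : Prop := g *m g^T = 1%:M.

(* The six basic wave vectors, indexed by 'I_6 in the order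
   q1, q2, p1, p2, p3, p4 (matching the coordinates z1,z2,w1,w2,w3,w4). *)
Definition basevec (l1 l2 n2 : nat) (j : 'I_6) : 'rV[R]_2 :=
  match val j with
  | 0 => pt l1%:R 0
  | 1 => pt 0 l1%:R
  | 2 => pt l2%:R n2%:R
  | 3 => pt l2%:R (- n2%:R)
  | 4 => pt n2%:R l2%:R
  | _ => pt n2%:R (- l2%:R)
  end.

(* tilde A is indexed by 'I_6 * bool : (j,false) = +basevec j, (j,true) = -basevec j. *)
Definition tvec (l1 l2 n2 : nat) (v : 'I_6 * bool) : 'rV[R]_2 :=
  if v.2 then - basevec l1 l2 n2 v.1 else basevec l1 l2 n2 v.1.

(* (z,w) in C^6 is a function x : 'I_6 -> C, x = (z1,z2,w1,w2,w3,w4).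
   avar x v is the variable z_i, \bar z_i, w_j, \bar w_j; it is also a(k) for k = tvec v. *)
Definition avar (x : 'I_6 -> C) (v : 'I_6 * bool) : C :=
  if v.2 then (x v.1)^* else x v.1.

Definition mono (e : 'I_6 * bool -> nat) (x : 'I_6 -> C) : C :=
  \prod_(v : 'I_6 * bool) avar x v ^+ e v.

Definition degree (e : 'I_6 * bool -> nat) : nat := \sum_(v : 'I_6 * bool) e v.

(* Translations T_{a,b}:
   z1 -> e^{-i l1 a} z1, z2 -> e^{-i l1 b} z2, w1 -> e^{-i(l2 a + n2 b)} w1,
   w2 -> e^{-i(l2 a - n2 b)} w2, w3 -> e^{-i(n2 a + l2 b)} w3, w4 -> e^{-i(n2 a - l2 b)} w4. *)
Definition transl (l1 l2 n2 : nat) (a b : R) (x : 'I_6 -> C) : 'I_6 -> C :=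
  fun j => expi (- (basevec l1 l2 n2 j 0 0 * a + basevec l1 l2 n2 j 0 1 * b)) * x j.

Definition gamma3 (x : 'I_6 -> C) : 'I_6 -> C :=
  fun j => match val j with
  | 0 => x 0
  | 1 => (x 1)^*
  | 2 => x 3
  | 3 => x 2
  | 4 => x 5
  | _ => x 4
  end.

Definition vec6 (z1 z2 w1 w2 w3 w4 : C) : 'I_6 -> C :=
  fun j => match val j with
  | 0 => z1 | 1 => z2 | 2 => w1 | 3 => w2 | 4 => w3 | _ => w4 end.

Definition Psum (l1 l2 n2 p : nat) (P : 'rV[R]_2 -> ('I_p -> 'rV[R]_2) -> C)
  (k : 'rV[R]_2) (x : 'I_6 -> C) : C :=
  \sum_(t : {ffun 'I_p -> 'I_6 * bool})
     (\prod_(i < p) avar x (t i)) * P k (fun i => tvec l1 l2 n2 (t i)).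

End Defs.

(* Main.v *)
Require Import Defs.
From HB Require Import structures.
From mathcomp Require Import all_boot all_order all_algebra.
From mathcomp Require Import reals trigo complex.
From mathcomp Require Import boolp ring lra zify.
Import Order.TTheory GRing.Theory Num.Theory.
Local Open Scope ring_scope.

Ltac casev v := case: v => [[[|[|[|[|[|[|?]]]]]] ?] []] //.

Notation V := ('I_6 * bool)%type.
Definition o0 : 'I_6 := @Ordinal 6 0 isT.
Definition o1 : 'I_6 := @Ordinal 6 1 isT.
Definition o2 : 'I_6 := @Ordinal 6 2 isT.
Definition o3 : 'I_6 := @Ordinal 6 3 isT.
Definition o4 : 'I_6 := @Ordinal 6 4 isT.
Definition o5 : 'I_6 := @Ordinal 6 5 isT.

Section S.
Variable R : realType.
Definition bx (l1 l2 n2 : nat) (j : 'I_6) : R :=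
  match val j with 0 => l1%:R | 1 => 0 | 2 => l2%:R | 3 => l2%:R | 4 => n2%:R | _ => n2%:R end.
Definition by_ (l1 l2 n2 : nat) (j : 'I_6) : R :=
  match val j with 0 => 0 | 1 => l1%:R | 2 => n2%:R | 3 => - n2%:R | 4 => l2%:R | _ => - l2%:R end.
Definition cx l1 l2 n2 (v : V) : R := if v.2 then - bx l1 l2 n2 v.1 else bx l1 l2 n2 v.1.
Definition cy l1 l2 n2 (v : V) : R := if v.2 then - by_ l1 l2 n2 v.1 else by_ l1 l2 n2 v.1.
End S.

Definition sv (v : V) : V := let: (j, b) := v in
  match val j with 1 => (j, ~~ b) | 2 => (o3, b) | 3 => (o2, b) | 4 => (o5, b) | 5 => (o4, b) | _ => (j, b) end.
Definition psi (v : V) : V := let: (j, b) := v in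
  match val j with 0 => (o3, b) | 1 => (o4, b) | 2 => (o0, b) | 3 => (o2, b) | 4 => (o5, b) | _ => (o1, ~~ b) end.
Definition inD (v : V) : bool := val v.1 \in [:: 0; 1; 2; 5]%N.


Lemma tvec_x (R : realType) l1 l2 n2 v : tvec R l1 l2 n2 v 0 0 = cx R l1 l2 n2 v.
Proof. by casev v; rewrite /tvec /basevec /pt /cx /bx /= ?mxE /= ?mxE. Qed.
Lemma tvec_y (R : realType) l1 l2 n2 v : tvec R l1 l2 n2 v 0 1 = cy R l1 l2 n2 v.
Proof. by casev v; rewrite /tvec /basevec /pt /cy /by_ /= ?mxE /= ?mxE. Qed.

Lemma cinj (R : realType) (l1 l2 n2 : nat) (hn : 0 < n2%:R :> R) (hnl : n2%:R < l2%:R :> R)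
  (hll : l2%:R < l1%:R :> R) v w :
  cx R l1 l2 n2 v = cx R l1 l2 n2 w -> cy R l1 l2 n2 v = cy R l1 l2 n2 w -> w = v.
Proof.
casev v; casev w; rewrite /cx /cy /bx /by_ /= => h1 h2; (apply/eqP; done) || (exfalso; lra).
Qed.


Definition ap (R : realType) l1 l2 n2 v : R := l2%:R * cx R l1 l2 n2 v + n2%:R * cy R l1 l2 n2 v.
Definition bp (R : realType) l1 l2 n2 v : R := l2%:R * cy R l1 l2 n2 v - n2%:R * cx R l1 l2 n2 v.

Lemma frame1 (R : realType) (l1 l2 n2 : nat) (hn : 0 < n2%:R :> R) (hl2 : 0 < l2%:R :> R) (hl1 : 0 < l1%:R :> R)
 (hnl : n2%:R < l2%:R :> R) (hll : l2%:R < l1%:R :> R)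
 (hK : l1%:R ^+ 2 = l2%:R ^+ 2 + n2%:R ^+ 2 :> R)
 (h3 : l2%:R ^+ 2 <> 3 * n2%:R ^+ 2 :> R)
 (h2 : (l2%:R - n2%:R) ^+ 2 <> 2 * n2%:R ^+ 2 :> R) v w :
 ap R l1 l2 n2 v = l1%:R * cx R l1 l2 n2 w -> bp R l1 l2 n2 v = l1%:R * cy R l1 l2 n2 w -> inD v /\ w = psi v.
Proof.
rewrite /ap /bp.
casev v; casev w; rewrite /cx /cy /bx /by_ /= => e1 e2;
 first [ by split; [|apply/eqP] | (exfalso; first [ clear h2 h3; nra | apply h3; clear h2 h3; nra | apply h2; clear h2 h3; nra
  | (have hh : l1%:R = 2 * n2%:R :> R; first by (apply: (mulfI (lt0r_neq0 hl2)); clear h2 h3; lra));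
     first [ clear h2 h3; nra | apply h3; clear h2 h3; nra ]
  | (have hh : l1%:R = 2 * l2%:R :> R; first by (apply: (mulfI (lt0r_neq0 hn)); clear h2 h3; lra));
     first [ clear h2 h3; nra | apply h3; clear h2 h3; nra ] ]) ].
Qed.

Lemma frame2 (R : realType) (l1 l2 n2 : nat) (hn : 0 < n2%:R :> R) (hl2 : 0 < l2%:R :> R) (hl1 : 0 < l1%:R :> R)
 (hnl : n2%:R < l2%:R :> R) (hll : l2%:R < l1%:R :> R)
 (hK : l1%:R ^+ 2 = l2%:R ^+ 2 + n2%:R ^+ 2 :> R)
 (h3 : l2%:R ^+ 2 <> 3 * n2%:R ^+ 2 :> R)
 (h2 : (l2%:R - n2%:R) ^+ 2 <> 2 * n2%:R ^+ 2 :> R) v w :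
 ap R l1 l2 n2 v = l1%:R * cx R l1 l2 n2 w -> bp R l1 l2 n2 v = - (l1%:R * cy R l1 l2 n2 w) -> inD v /\ w = sv (psi v).
Proof.
rewrite /ap /bp.
casev v; casev w; rewrite /cx /cy /bx /by_ /= => e1 e2;
 first [ by split; [|apply/eqP] | (exfalso; first [ clear h2 h3; nra | apply h3; clear h2 h3; nra | apply h2; clear h2 h3; nra
  | (have hh : l1%:R = 2 * n2%:R :> R; first by (apply: (mulfI (lt0r_neq0 hl2)); clear h2 h3; lra));
     first [ clear h2 h3; nra | apply h3; clear h2 h3; nra ]
  | (have hh : l1%:R = 2 * l2%:R :> R; first by (apply: (mulfI (lt0r_neq0 hn)); clear h2 h3; lra));
     first [ clear h2 h3; nra | apply h3; clear h2 h3; nra ] ]) ].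
Qed.

Lemma frame3 (R : realType) (l1 l2 n2 : nat) (hn : 0 < n2%:R :> R) (hl2 : 0 < l2%:R :> R) (hl1 : 0 < l1%:R :> R)
 (hnl : n2%:R < l2%:R :> R) (hll : l2%:R < l1%:R :> R)
 (hK : l1%:R ^+ 2 = l2%:R ^+ 2 + n2%:R ^+ 2 :> R)
 (h3 : l2%:R ^+ 2 <> 3 * n2%:R ^+ 2 :> R)
 (h2 : (l2%:R - n2%:R) ^+ 2 <> 2 * n2%:R ^+ 2 :> R) v w : ~~ inD v ->
 ap R l1 l2 n2 w = ap R l1 l2 n2 v -> bp R l1 l2 n2 w = - bp R l1 l2 n2 v -> False.
Proof.
rewrite /ap /bp.
casev v; casev w; rewrite /cx /cy /bx /by_ /= => _ e1 e2; (exfalso; first [ clear h2 h3; nra | apply h3; clear h2 h3; nra | apply h2; clear h2 h3; nra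
  | (have hh : l1%:R = 2 * n2%:R :> R; first by (apply: (mulfI (lt0r_neq0 hl2)); clear h2 h3; lra));
     first [ clear h2 h3; nra | apply h3; clear h2 h3; nra ]
  | (have hh : l1%:R = 2 * l2%:R :> R; first by (apply: (mulfI (lt0r_neq0 hn)); clear h2 h3; lra));
     first [ clear h2 h3; nra | apply h3; clear h2 h3; nra ] ]).
Qed.

Set Implicit Arguments. Unset Strict Implicit. Unset Printing Implicit Defensive.


Lemma mul2E (R : realType) m n (A : 'M[R]_(m,2)) (B : 'M[R]_(2,n)) i j :
  (A *m B) i j = A i 0 * B 0 j + A i 1 * B 1 j.
Proof.
rewrite mxE !big_ord_recl big_ord0 addr0.
have -> : (lift ord0 ord0 : 'I_2) = 1 by apply/val_inj.
by [].
Qed.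

Definition dot (R : realType) (u v : 'rV[R]_2) := u 0 0 * v 0 0 + u 0 1 * v 0 1.
Definition crs (R : realType) (u v : 'rV[R]_2) := u 0 0 * v 0 1 - u 0 1 * v 0 0.

Lemma orth_eqs (R : realType) (g : 'M[R]_2) : orth2 g ->
  [/\ g 0 0 ^+ 2 + g 0 1 ^+ 2 = 1, g 1 0 ^+ 2 + g 1 1 ^+ 2 = 1 & g 0 0 * g 1 0 + g 0 1 * g 1 1 = 0].
Proof.
rewrite /orth2 => h.
have e := fun i j => congr1 (fun M : 'M[R]_2 => M i j) h.
have e00 := e 0 0; have e11 := e 1 1; have e01 := e 0 1.
rewrite !mul2E !mxE /= in e00 e11 e01.
by split; rewrite -?e00 -?e11 -?e01 ?expr2.
Qed.

Lemma dot_orth (R : realType) (g : 'M[R]_2) u v : orth2 g -> dot (u *m g) (v *m g) = dot u v.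
Proof.
move=> /orth_eqs [h1 h2 h3]; rewrite /dot !mul2E.
transitivity (u 0 0 * v 0 0 * (g 0 0 ^+ 2 + g 0 1 ^+ 2) + u 0 1 * v 0 1 * (g 1 0 ^+ 2 + g 1 1 ^+ 2)
  + (u 0 0 * v 0 1 + u 0 1 * v 0 0) * (g 0 0 * g 1 0 + g 0 1 * g 1 1)); first by ring.
by rewrite h1 h2 h3; ring.
Qed.

Lemma crs_orth (R : realType) (g : 'M[R]_2) : orth2 g ->
  exists2 l : R, (l = 1 \/ l = -1) & forall u v, crs (u *m g) (v *m g) = l * crs u v.
Proof.
move=> /orth_eqs [h1 h2 h3].
exists (g 0 0 * g 1 1 - g 0 1 * g 1 0); last by move=> u v; rewrite /crs !mul2E; ring.
have hl : (g 0 0 * g 1 1 - g 0 1 * g 1 0) ^+ 2 = 1.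
  transitivity ((g 0 0 ^+ 2 + g 0 1 ^+ 2) * (g 1 0 ^+ 2 + g 1 1 ^+ 2) - (g 0 0 * g 1 0 + g 0 1 * g 1 1) ^+ 2); first by ring.
  by rewrite h1 h2 h3; ring.
move: hl; set l := _ - _ => hl.
have : (l - 1) * (l + 1) = 0 by rewrite -subr_sqr hl expr1n subrr.
move/eqP; rewrite mulf_eq0 => /orP [/eqP h | /eqP h]; [left | right].
  by apply/eqP; rewrite -subr_eq0 h.
by apply/eqP; rewrite -addr_eq0 h.
Qed.

Lemma mulmx_orth_inj (R : realType) (g : 'M[R]_2) (u v : 'rV[R]_2) : orth2 g -> u *m g = v *m g -> u = v.
Proof.
rewrite /orth2 => hg h.
have := congr1 (mulmx^~ g^T) h; by rewrite -!mulmxA hg !mulmx1.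
Qed.

Section W.
Variables (R : realType) (p : nat) (T : finType) (fa fb : T -> 'I_p -> R) (c : T -> complex R).
Definition Cf (a b : 'I_p -> R) (t : T) : bool :=
  [forall i, a i == fa t i] && ([forall i, b i == fb t i] || [forall i, b i == - fb t i]).
Lemma Cf_ext a b a' b' : (forall i, a i = a' i) -> (forall i, b i = b' i) -> Cf a b =1 Cf a' b'.
Proof.
move=> ha hb t; rewrite /Cf; congr (_ && (_ || _)); apply: eq_forallb => i; by rewrite ?ha ?hb.
Qed.
Lemma Cf_opp a b : Cf a (fun i => - b i) =1 Cf a b.
Proof.
move=> t; rewrite /Cf orbC; congr (_ && (_ || _)); apply: eq_forallb => i.
  by rewrite eqr_opp.
by rewrite eqr_oppLR.
Qed.
End W.


Lemma cinj2 (R : realType) (l1 l2 n2 : nat) (hn : 0 < n2%:R :> R) (hnl : n2%:R < l2%:R :> R)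
  (hll : l2%:R < l1%:R :> R) v w :
  cx R l1 l2 n2 v = cx R l1 l2 n2 w -> cy R l1 l2 n2 v = - cy R l1 l2 n2 w -> w = sv v.
Proof.
casev v; casev w; rewrite /cx /cy /bx /by_ /= => h1 h2; first [ by apply/eqP | exfalso; lra ].
Qed.

Lemma svK v : sv (sv v) = v.
Proof. by casev v; apply/eqP. Qed.

Lemma rot1 (R : realType) (l1 l2 n2 : nat) (hK : l1%:R ^+ 2 = l2%:R ^+ 2 + n2%:R ^+ 2 :> R) v : inD v ->
  ap R l1 l2 n2 v = l1%:R * cx R l1 l2 n2 (psi v) /\ bp R l1 l2 n2 v = l1%:R * cy R l1 l2 n2 (psi v).
Proof.
rewrite /ap /bp.
casev v; rewrite /cx /cy /bx /by_ /= => _; split; nra.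
Qed.

Lemma apbp_inj (R : realType) (l1 l2 n2 : nat) (hn : 0 < n2%:R :> R) (hnl : n2%:R < l2%:R :> R)
  (hll : l2%:R < l1%:R :> R) (hK : l1%:R ^+ 2 = l2%:R ^+ 2 + n2%:R ^+ 2 :> R) v w :
  ap R l1 l2 n2 v = ap R l1 l2 n2 w -> bp R l1 l2 n2 v = bp R l1 l2 n2 w -> w = v.
Proof.
move=> e1 e2.
have hl : (l1%:R : R) ^+ 2 != 0 by rewrite expf_neq0 // lt0r_neq0 //; lra.
apply: (@cinj R l1 l2 n2 hn hnl hll).
  apply: (mulfI hl).
  have E : forall u, (l1%:R : R) ^+ 2 * cx R l1 l2 n2 u = l2%:R * ap R l1 l2 n2 u - n2%:R * bp R l1 l2 n2 u.
    by move=> u; rewrite hK /ap /bp; ring.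
  by rewrite !E e1 e2.
apply: (mulfI hl).
have E : forall u, (l1%:R : R) ^+ 2 * cy R l1 l2 n2 u = n2%:R * ap R l1 l2 n2 u + l2%:R * bp R l1 l2 n2 u.
  by move=> u; rewrite hK /ap /bp; ring.
by rewrite !E e1 e2.
Qed.


Section P.
Variables (R : realType) (l1 l2 n2 p : nat).
Notation TT := {ffun 'I_p -> V}.
Variables (c d : TT -> complex R).
Notation cx := (cx R l1 l2 n2).
Notation cy := (cy R l1 l2 n2).
Notation ap := (ap R l1 l2 n2).
Notation bp := (bp R l1 l2 n2).
Definition faq (t : TT) (i : 'I_p) : R := l1%:R * cx (t i).
Definition fbq (t : TT) (i : 'I_p) : R := l1%:R * cy (t i).
Definition fap (t : TT) (i : 'I_p) : R := ap (t i).
Definition fbp (t : TT) (i : 'I_p) : R := bp (t i).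

Definition Wf (a b : 'I_p -> R) : complex R :=
  match [pick t | Cf faq fbq a b t] with
  | Some t => c t
  | None => match [pick u | Cf fap fbp a b u] with Some u => d u | None => 0 end
  end.

Definition Pf (k : 'rV[R]_2) (ks : 'I_p -> 'rV[R]_2) : complex R :=
  if k == \sum_i ks i then Wf (fun i => dot k (ks i)) (fun i => crs k (ks i)) else 0.

Lemma Wf_ext a b a' b' : (forall i, a i = a' i) -> (forall i, b i = b' i) -> Wf a b = Wf a' b'.
Proof.
move=> ha hb; rewrite /Wf (eq_pick (Cf_ext faq fbq ha hb)) (eq_pick (Cf_ext fap fbp ha hb)) //.
Qed.

Lemma Wf_opp a b : Wf a (fun i => - b i) = Wf a b.
Proof. by rewrite /Wf (eq_pick (Cf_opp faq fbq a b)) (eq_pick (Cf_opp fap fbp a b)). Qed.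

Lemma Pf_inv (g : 'M[R]_2) k ks : orth2 g -> Pf (k *m g) (fun i => ks i *m g) = Pf k ks.
Proof.
move=> hg; rewrite /Pf -mulmx_suml.
have -> : (k *m g == (\sum_i ks i) *m g) = (k == \sum_i ks i).
  by apply/eqP/eqP => [/(mulmx_orth_inj hg)|->].
case: eqP => // _.
have [l hl hc] := crs_orth hg.
case: hl => ?; subst l.
  by apply: Wf_ext => i; rewrite ?dot_orth ?hc ?mul1r.
rewrite -Wf_opp; apply: Wf_ext => i; by rewrite ?dot_orth ?hc ?mulN1r ?opprK.
Qed.

Hypotheses (hn : 0 < n2%:R :> R) (hl2 : 0 < l2%:R :> R) (hl1 : 0 < l1%:R :> R)
 (hnl : n2%:R < l2%:R :> R) (hll : l2%:R < l1%:R :> R)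
 (hK : l1%:R ^+ 2 = l2%:R ^+ 2 + n2%:R ^+ 2 :> R)
 (h3 : l2%:R ^+ 2 <> 3 * n2%:R ^+ 2 :> R)
 (h2 : (l2%:R - n2%:R) ^+ 2 <> 2 * n2%:R ^+ 2 :> R).
Hypothesis csym : forall t : TT, c [ffun i => sv (t i)] = c t.

Let hl1n : (l1%:R : R) != 0. Proof. exact: lt0r_neq0. Qed.

Lemma Cf_self (fa fb : TT -> 'I_p -> R) t : Cf fa fb (fa t) (fb t) t.
Proof. by rewrite /Cf; apply/andP; split; [apply/forallP => i | apply/orP; left; apply/forallP => i]. Qed.

Lemma Wq t : Wf (faq t) (fbq t) = c t.
Proof.
rewrite /Wf; case: pickP => [t' | H]; last by have := H t; rewrite Cf_self.
move/andP => [/forallP ha /orP[/forallP hb|/forallP hb]].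
  suff -> : t' = t by [].
  apply/ffunP => i; apply: (@cinj R l1 l2 n2 hn hnl hll).
    by apply: (mulfI hl1n); apply/eqP; have := ha i; rewrite /faq.
  by apply: (mulfI hl1n); apply/eqP; have := hb i; rewrite /fbq.
suff -> : t' = [ffun i => sv (t i)] by rewrite csym.
apply/ffunP => i; rewrite ffunE; apply: (@cinj2 R l1 l2 n2 hn hnl hll).
  by apply: (mulfI hl1n); apply/eqP; have := ha i; rewrite /faq.
apply: (mulfI hl1n); rewrite mulrN; apply/eqP; have := hb i; by rewrite /fbq.
Qed.

Lemma Wp_in (u : TT) : (forall i, inD (u i)) -> Wf (fap u) (fbp u) = c [ffun i => psi (u i)].
Proof.
move=> hu; rewrite /Wf; case: pickP => [t | H]; last first.
  have := H [ffun i => psi (u i)]; rewrite /Cf.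
  have hr := fun i => @rot1 R l1 l2 n2 hK (u i) (hu i).
  have -> : [forall i, fap u i == faq [ffun i0 => psi (u i0)] i].
    by apply/forallP => i; rewrite /fap /faq ffunE (proj1 (hr i)).
  have -> : [forall i, fbp u i == fbq [ffun i0 => psi (u i0)] i] by
    apply/forallP => i; rewrite /fbp /fbq ffunE (proj2 (hr i)).
  by [].
move/andP => [/forallP ha /orP[/forallP hb|/forallP hb]].
  suff -> : t = [ffun i => psi (u i)] by [].
  apply/ffunP => i; rewrite ffunE.
  have [_ ->] := @frame1 R l1 l2 n2 hn hl2 hl1 hnl hll hK h3 h2 (u i) (t i) (eqP (ha i)) (eqP (hb i)).
  by [].
suff -> : t = [ffun i => sv ([ffun i => psi (u i)] i)] by rewrite csym.
apply/ffunP => i; rewrite !ffunE.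
have [_ ->] := @frame2 R l1 l2 n2 hn hl2 hl1 hnl hll hK h3 h2 (u i) (t i) (eqP (ha i)) (eqP (hb i)).
by [].
Qed.

Lemma Wp_out (u : TT) : ~~ [forall i, inD (u i)] -> Wf (fap u) (fbp u) = d u.
Proof.
move=> hu; rewrite /Wf; case: pickP => [t | _].
  move/andP => [/forallP ha /orP[/forallP hb|/forallP hb]]; exfalso; move/negP: hu; apply; apply/forallP => i.
    by have [-> _] := @frame1 R l1 l2 n2 hn hl2 hl1 hnl hll hK h3 h2 (u i) (t i) (eqP (ha i)) (eqP (hb i)).
  by have [-> _] := @frame2 R l1 l2 n2 hn hl2 hl1 hnl hll hK h3 h2 (u i) (t i) (eqP (ha i)) (eqP (hb i)).
case: pickP => [u' | H]; last by have := H u; rewrite Cf_self.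
move/andP => [/forallP ha /orP[/forallP hb|/forallP hb]].
  suff -> : u' = u by [].
  apply/ffunP => i; apply: (@apbp_inj R l1 l2 n2 hn hnl hll hK); [exact: (eqP (ha i)) | exact: (eqP (hb i))].
exfalso; move/forallPn: hu => [i0 hi0].
apply: (@frame3 R l1 l2 n2 hn hl2 hl1 hnl hll hK h3 h2 (u i0) (u' i0) hi0).
  by have := eqP (ha i0); rewrite /fap => ->.
by have := eqP (hb i0); rewrite /fbp => ->; rewrite opprK.
Qed.
End P.



Lemma avar_g3 (R : realType) (x : 'I_6 -> complex R) v : avar (gamma3 x) v = avar x (sv v).
Proof. casev v; rewrite /avar /gamma3 /= ?conjCK; first [ by [] | by congr (x _); apply/val_inj | by congr (_ ^*); congr (x _); apply/val_inj ]. Qed.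

Lemma avar_psi (R : realType) (z1 z2 w2 w3 : complex R) v :
  avar (vec6 z1 z2 0 w2 w3 0) (psi v) = avar (vec6 w2 w3 z1 0 0 z2^*) v.
Proof. by casev v; rewrite /avar /vec6 /= ?conjCK ?conjC0. Qed.

Lemma avar_vec6D (R : realType) (x : 'I_6 -> complex R) v :
  avar (vec6 (x 0) (x 1) (x 2) 0 0 (x 5)) v = if inD v then avar x v else 0.
Proof.
casev v; rewrite /avar /vec6 /inD /= ?conjC0 //; first [ by [] | by congr (x _); apply/val_inj | by congr (_ ^*); congr (x _); apply/val_inj ].
Qed.

Lemma ord2_cases (j : 'I_2) : j = 0 \/ j = 1.
Proof. by case: j => [[|[|?]] ?]; [left|right|]; try apply/val_inj. Qed.

Lemma rv2P (R : realType) (u v : 'rV[R]_2) : u 0 0 = v 0 0 -> u 0 1 = v 0 1 -> u = v.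
Proof. by move=> h0 h1; apply/rowP => j; case: (ord2_cases j) => ->. Qed.

Lemma aux1 (R : realType) (a b c : R) : c != 0 -> c ^+ 2 = a ^+ 2 + b ^+ 2 -> a / c * (a / c) + b / c * (b / c) = 1.
Proof. move=> hc hK.
have -> : a / c * (a / c) + b / c * (b / c) = (a ^+ 2 + b ^+ 2) / c ^+ 2 by field.
by rewrite -hK divff // expf_neq0.
Qed.
Lemma aux4 (R : realType) (a b c : R) : c != 0 -> c ^+ 2 = a ^+ 2 + b ^+ 2 -> - b / c * (- b / c) + a / c * (a / c) = 1.
Proof. move=> hc hK.
have -> : - b / c * (- b / c) + a / c * (a / c) = (a ^+ 2 + b ^+ 2) / c ^+ 2 by field.
by rewrite -hK divff // expf_neq0.
Qed.
Lemma aux2 (R : realType) (a b c : R) : c != 0 -> a / c * (- b / c) + b / c * (a / c) = 0.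
Proof. move=> hc; by field. Qed.
Lemma aux3 (R : realType) (a b c : R) : c != 0 -> - b / c * (a / c) + a / c * (b / c) = 0.
Proof. move=> hc; by field. Qed.

Section G.
Variables (R : realType) (l1 l2 n2 : nat).
Hypotheses (hn : 0 < n2%:R :> R) (hl2 : 0 < l2%:R :> R) (hl1 : 0 < l1%:R :> R)
 (hnl : n2%:R < l2%:R :> R) (hll : l2%:R < l1%:R :> R)
 (hK : l1%:R ^+ 2 = l2%:R ^+ 2 + n2%:R ^+ 2 :> R).
Let hl1n : (l1%:R : R) != 0. Proof. exact: lt0r_neq0. Qed.
Notation cx := (cx R l1 l2 n2).
Notation cy := (cy R l1 l2 n2).
Notation tv := (tvec R l1 l2 n2).
Notation q1 := (basevec R l1 l2 n2 0).
Notation p1 := (basevec R l1 l2 n2 2).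

Definition Gm : 'M[R]_2 := \matrix_(i, j) ((if i == 0 then (if j == 0 then l2%:R else n2%:R)
   else (if j == 0 then - n2%:R else l2%:R)) / l1%:R).

Lemma q1E : q1 0 0 = l1%:R /\ q1 0 1 = 0.
Proof. by rewrite /basevec /pt !mxE. Qed.
Lemma p1E : p1 0 0 = l2%:R /\ p1 0 1 = n2%:R.
Proof. by rewrite /basevec /pt !mxE. Qed.

Lemma rot2 v : inD v -> cx v * l1%:R = l2%:R * cx (psi v) - n2%:R * cy (psi v) /\
   cy v * l1%:R = n2%:R * cx (psi v) + l2%:R * cy (psi v).
Proof. casev v; rewrite /cx /cy /bx /by_ /= => _; split; have hK' := hK; nra. Qed.

Lemma tvecG v : inD v -> tv (psi v) *m Gm = tv v.
Proof.
move=> hv; have [e1 e2] := rot2 hv.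
apply: rv2P; rewrite !mul2E !mxE /= !tvec_x !tvec_y; apply: (mulIf hl1n).
  by rewrite e1; field.
by rewrite e2; field.
Qed.

Lemma q1G : q1 *m Gm = p1.
Proof.
by apply: rv2P; rewrite !mul2E /basevec /pt !mxE /=; field.
Qed.

Lemma orthG : orth2 Gm.
Proof.
apply/matrixP => i j; rewrite mul2E !mxE /=.
case: (ord2_cases i) => ->; case: (ord2_cases j) => -> /=;
  [ apply: aux1 | apply: aux2 | apply: aux3 | apply: aux4 ] => //.
Qed.

Lemma onA_tv v : onA l1%:R (tv v).
Proof.
rewrite /onA tvec_x tvec_y.
have -> : cx v ^+ 2 + cy v ^+ 2 = l1%:R ^+ 2.
  by have hK' := hK; casev v; rewrite /cx /cy /bx /by_ /=; nra.
by rewrite sqrtr_sqr ger0_norm // ltW.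
Qed.

Lemma onA_q1 : onA l1%:R q1.
Proof.
have [a b] := q1E; rewrite /onA a b expr0n addr0 sqrtr_sqr ger0_norm // ltW.
Qed.

Lemma dot_q1 v : dot q1 (tv v) = l1%:R * cx v.
Proof. have [a b] := q1E; by rewrite /dot a b tvec_x tvec_y mul0r addr0. Qed.
Lemma crs_q1 v : crs q1 (tv v) = l1%:R * cy v.
Proof. have [a b] := q1E; by rewrite /crs a b tvec_x tvec_y mul0r subr0. Qed.
Lemma dot_p1 v : dot p1 (tv v) = ap R l1 l2 n2 v.
Proof. have [a b] := p1E; by rewrite /dot a b tvec_x tvec_y. Qed.
Lemma crs_p1 v : crs p1 (tv v) = bp R l1 l2 n2 v.
Proof. have [a b] := p1E; by rewrite /crs a b tvec_x tvec_y /bp; ring. Qed.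
End G.


Lemma expiD (R : realType) (a b : R) : expi a * expi b = expi (a + b).
Proof.
rewrite /expi cosD sinD; apply/eqP; rewrite eq_complex /=; apply/andP; split; apply/eqP; ring.
Qed.

Lemma expi0 (R : realType) : expi (0 : R) = 1.
Proof. by rewrite /expi cos0 sin0. Qed.

Lemma conj_expi (R : realType) (t : R) : Num.conj (expi t) = expi (- t).
Proof. by rewrite /expi cosN sinN. Qed.

Lemma conj_mul_expi (R : realType) (t : R) z : Num.conj (expi t * z) = expi (- t) * Num.conj z.
Proof. rewrite rmorphM; congr (_ * _); exact: conj_expi. Qed.

Lemma expi_sum (R : realType) (I : Type) (r : seq I) (f : I -> R) :
  \prod_(i <- r) expi (f i) = expi (\sum_(i <- r) f i).
Proof.
by rewrite (big_morph (@expi R) (fun a b => esym (@expiD R a b)) (@expi0 R)).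
Qed.

Lemma expi_eq1 (R : realType) (K : R) : (forall a, expi (K * a) = 1) -> K = 0.
Proof.
move=> h; apply/eqP; apply/negP => /negP hK.
have := h (pi / 2 / K); rewrite mulrC divfK // /expi sin_pihalf cos_pihalf.
move/eqP; rewrite eq_complex /= => /andP [_ /eqP]; lra.
Qed.

Section Tr.
Variables (R : realType) (l1 l2 n2 : nat).
Notation cx := (cx R l1 l2 n2).
Notation cy := (cy R l1 l2 n2).

Lemma bv_x j : basevec R l1 l2 n2 j 0 0 = cx (j, false).
Proof. by rewrite -tvec_x. Qed.
Lemma bv_y j : basevec R l1 l2 n2 j 0 1 = cy (j, false).
Proof. by rewrite -tvec_y. Qed.

Lemma avar_transl a b (x : 'I_6 -> complex R) v :
  avar (transl l1 l2 n2 a b x) v = expi (- (cx v * a + cy v * b)) * avar x v.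
Proof.
case: v => j [] ; rewrite /avar /transl /= bv_x bv_y //.
rewrite conj_mul_expi /cx /cy /=; congr (expi _ * _); ring.
Qed.

Lemma sum_cond (e : V -> nat) p (t0 : {ffun 'I_p -> V}) (j0 : 'I_6) :
 (forall y : 'I_6 -> complex R, mono e y = \prod_i avar y (t0 i)) ->
 (forall a b (x : 'I_6 -> complex R),
     (transl l1 l2 n2 a b x j0)^* * mono e (transl l1 l2 n2 a b x) = (x j0)^* * mono e x) ->
 \sum_i tvec R l1 l2 n2 (t0 i) = basevec R l1 l2 n2 j0.
Proof.
move=> hm hinv.
pose x1 := fun _ : 'I_6 => (1 : complex R).
have ax1 : forall v, avar x1 v = 1 by move=> [j []]; rewrite /avar /x1 //= conjC1.
have key : forall a b, expi ((cx (j0,false) - \sum_i cx (t0 i)) * a + (cy (j0,false) - \sum_i cy (t0 i)) * b) = 1.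
  move=> a b; have := hinv a b x1; rewrite !hm.
  have e1 : \prod_i avar x1 (t0 i) = 1 by rewrite big1 // => i _; rewrite ax1.
  have e2 : \prod_i avar (transl l1 l2 n2 a b x1) (t0 i) = expi (\sum_i - (cx (t0 i) * a + cy (t0 i) * b)).
    rewrite -expi_sum; apply: eq_bigr => i _; by rewrite avar_transl ax1 mulr1.
  rewrite e1 e2 /transl /x1 !mulr1 conj_expi conjC1 expiD bv_x bv_y => <-.
  congr expi; rewrite sumrN big_split /= -!mulr_suml; ring.
have K0 : cx (j0,false) - \sum_i cx (t0 i) = 0.
  by apply: expi_eq1 => a; have := key a 0; rewrite mulr0 addr0.
have L0 : cy (j0,false) - \sum_i cy (t0 i) = 0.
  by apply: expi_eq1 => b; have := key 0 b; rewrite mulr0 add0r.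
apply: rv2P; rewrite !summxE ?bv_x ?bv_y.
  rewrite (eq_bigr _ (fun i _ => tvec_x _ _ _ _ _)).
  by move/eqP: K0; rewrite subr_eq0 => /eqP ->.
rewrite (eq_bigr _ (fun i _ => tvec_y _ _ _ _ _)).
by move/eqP: L0; rewrite subr_eq0 => /eqP ->.
Qed.
End Tr.


Lemma prod_nseq (C : comRingType) (I : Type) (F : I -> C) n a : \prod_(x <- nseq n a) F x = F a ^+ n.
Proof. by elim: n => [|n IH]; rewrite ?big_nil ?expr0 // big_cons IH exprS. Qed.

Lemma ex_tuple (R : realType) (e : V -> nat) n : degree e = n ->
  exists t : {ffun 'I_n -> V}, forall y : 'I_6 -> complex R, mono e y = \prod_i avar y (t i).
Proof.
move=> <-.
pose s := flatten [seq nseq (e v) v | v <- index_enum V].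
have hs : size s = degree e.
  rewrite size_flatten /shape -map_comp sumnE big_map /degree; apply: eq_bigr => v _.
  by rewrite /= size_nseq.
exists [ffun i : 'I_(degree e) => nth (o0, false) s i] => y.
rewrite (eq_bigr (fun i : 'I_(degree e) => avar y (nth (o0, false) s i))); last by move=> i _; rewrite ffunE.
transitivity (\prod_(v <- s) avar y v); last by rewrite (big_nth (o0, false)) hs big_mkord.
rewrite big_flatten big_map /mono; apply: eq_bigr => v _.
by rewrite prod_nseq.
Qed.

Lemma no_sqrt (q a b : nat) : prime q -> (a ^ 2 = q * b ^ 2)%N -> (0 < b)%N -> False.
Proof.
move=> pq e hb.
have q0 : (0 < q)%N by exact: prime_gt0.
have ha : (0 < a)%N.
  have : (0 < a ^ 2)%N by rewrite e muln_gt0 q0 expn_gt0 hb.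
  by rewrite expn_gt0 orbF.
have := congr1 (logn q) e.
rewrite lognM // ?expn_gt0 ?hb // !lognX (@logn_prime q q pq) eqxx.
lia.
Qed.


Lemma psi_inj : injective psi.
Proof. move=> v w; casev v; casev w; move=> h; apply/eqP; move/eqP: h; by []. Qed.

Definition Psi p (u : {ffun 'I_p -> V}) : {ffun 'I_p -> V} := [ffun i => psi (u i)].
Definition svt p (u : {ffun 'I_p -> V}) : {ffun 'I_p -> V} := [ffun i => sv (u i)].

Lemma Psi_inj p : injective (@Psi p).
Proof.
move=> u u' /ffunP h; apply/ffunP => i; apply: psi_inj; have := h i; by rewrite !ffunE.
Qed.

Lemma svtK p : involutive (@svt p).
Proof. move=> u; apply/ffunP => i; by rewrite !ffunE svK. Qed.

Lemma cx_sv (R : realType) l1 l2 n2 v :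
  cx R l1 l2 n2 (sv v) = cx R l1 l2 n2 v /\ cy R l1 l2 n2 (sv v) = - cy R l1 l2 n2 v.
Proof. casev v; rewrite /cx /cy /bx /by_ /=; by split; rewrite ?opprK ?oppr0. Qed.

Lemma sum_delta (C : nzRingType) (T : finType) (F : T -> C) a : \sum_t F t * (t == a)%:R = F a.
Proof.
rewrite (bigD1 a) //= eqxx mulr1 big1 ?addr0 // => t /negbTE ->; by rewrite mulr0.
Qed.

Lemma prod0 (C : comNzRingType) (I : finType) (F : I -> C) i : F i = 0 -> \prod_j F j = 0.
Proof. by move=> h; rewrite (bigD1 i) //= h mul0r. Qed.

Lemma avar_out (R : realType) (a b c d : complex R) v : ~~ inD v -> avar (vec6 a b c 0 0 d) v = 0.
Proof. by casev v; rewrite /avar /vec6 /= ?conjC0. Qed.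

Lemma sum_sv (R : realType) l1 l2 n2 p (t : {ffun 'I_p -> V}) :
  \sum_i tvec R l1 l2 n2 (t i) = basevec R l1 l2 n2 0 ->
  \sum_i tvec R l1 l2 n2 (svt t i) = basevec R l1 l2 n2 0.
Proof.
move=> S; have S0 := congr1 (fun M : 'rV[R]_2 => M 0 0) S; have S1 := congr1 (fun M : 'rV[R]_2 => M 0 1) S.
rewrite /= !summxE in S0 S1.
apply: rv2P; rewrite !summxE.
  rewrite -S0; apply: eq_bigr => i _; by rewrite ffunE !tvec_x (proj1 (cx_sv _ _ _ _ _)).
have -> : basevec R l1 l2 n2 0 0 1 = 0 by rewrite /basevec /pt !mxE.
have -> : \sum_i tvec R l1 l2 n2 (svt t i) 0 1 = - \sum_i tvec R l1 l2 n2 (t i) 0 1.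
  rewrite -sumrN; apply: eq_bigr => i _; by rewrite ffunE !tvec_y (proj2 (cx_sv _ _ _ _ _)).
by rewrite S1 /basevec /pt !mxE /= oppr0.
Qed.

Theorem mainTheorem12 (R : realType) (l1 l2 n2 : nat)
  (hl : (0 < n2 < l2)%N /\ (l2 < l1)%N) (hk : (l1 ^ 2 = l2 ^ 2 + n2 ^ 2)%N)
  (p : nat) (hp : (1 <= p)%N) (e e' : 'I_6 * bool -> nat)
  (he : degree e = p) (he' : degree e' = p)
  (inv_e : forall (a b : R) (x : 'I_6 -> complex R),
     (transl l1 l2 n2 a b x 0)^* * mono e (transl l1 l2 n2 a b x) = (x 0)^* * mono e x)
  (inv_e' : forall (a b : R) (x : 'I_6 -> complex R),
     (transl l1 l2 n2 a b x 2)^* * mono e' (transl l1 l2 n2 a b x) = (x 2)^* * mono e' x) :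
  let f := fun x : 'I_6 -> complex R => mono e x + mono e (gamma3 x) in
  let h := fun x : 'I_6 -> complex R => mono e' x in
  let kappa : R := l1%:R in
  (exists P : 'rV[R]_2 -> ('I_p -> 'rV[R]_2) -> complex R,
     (forall (g : 'M[R]_2) (k : 'rV[R]_2) (ks : 'I_p -> 'rV[R]_2),
        orth2 g -> onA kappa k -> (forall i, onA kappa (ks i)) ->
        P (k *m g) (fun i => ks i *m g) = P k ks)
     /\ (forall (k : 'rV[R]_2) (ks : 'I_p -> 'rV[R]_2),
        onA kappa k -> (forall i, onA kappa (ks i)) ->
        k <> \sum_(i < p) ks i -> P k ks = 0)
     /\ (forall x : 'I_6 -> complex R,
           f x = @Psum R l1 l2 n2 p P (@basevec R l1 l2 n2 0) x
        /\ h x = @Psum R l1 l2 n2 p P (@basevec R l1 l2 n2 2) x))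
  <->
  (forall z1 z2 w2 w3 : complex R,
     f (vec6 z1 z2 0 w2 w3 0) = h (vec6 w2 w3 z1 0 0 z2^*)).
Proof.
move=> f h kappa.
case: hl => /andP [hn0 hnl0] hll0.
have hl20 : (0 < l2)%N by exact: (ltn_trans hn0 hnl0).
have hn : 0 < n2%:R :> R by rewrite ltr0n.
have hl2 : 0 < l2%:R :> R by rewrite ltr0n.
have hl1 : 0 < l1%:R :> R by rewrite ltr0n; exact: (ltn_trans hl20 hll0).
have hnl : n2%:R < l2%:R :> R by rewrite ltr_nat.
have hll : l2%:R < l1%:R :> R by rewrite ltr_nat.
have hK : l1%:R ^+ 2 = l2%:R ^+ 2 + n2%:R ^+ 2 :> R by rewrite -!natrX -natrD hk.
have h3 : l2%:R ^+ 2 <> 3 * n2%:R ^+ 2 :> R.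
  move=> e3; apply: (@no_sqrt 3 l2 n2 isT) => //; apply/eqP; rewrite -(eqr_nat R) natrM !natrX; apply/eqP; exact: e3.
have h2 : (l2%:R - n2%:R) ^+ 2 <> 2 * n2%:R ^+ 2 :> R.
  move=> e3; apply: (@no_sqrt 2 (l2 - n2) n2 isT) => //; apply/eqP.
  rewrite -(eqr_nat R) natrM !natrX natrB ?(ltnW hnl0) //; apply/eqP; exact: e3.
split.
- move=> [P [HP1 [HP2 HP3]]] z1 z2 w2 w3.
  rewrite (proj1 (HP3 _)) (proj2 (HP3 _)) /Psum (reindex_inj (@Psi_inj p)).
  apply: eq_bigr => u _.
  have -> : \prod_i avar (vec6 z1 z2 0 w2 w3 0) (Psi u i) = \prod_i avar (vec6 w2 w3 z1 0 0 z2^*) (u i).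
    by apply: eq_bigr => i _; rewrite ffunE avar_psi.
  case: (boolP [forall i, inD (u i)]) => hu.
    congr (_ * _).
    have HG := HP1 (Gm R l1 l2 n2) (basevec R l1 l2 n2 0) (fun i => tvec R l1 l2 n2 (Psi u i))
      (orthG hl1 hK) (onA_q1 R l1 l2 n2) (fun i => onA_tv hK _).
    rewrite -HG (q1G l2 n2 hl1); congr (P _ _); apply: funext => i.
    by rewrite ffunE (tvecG hl1 hK) //; exact: (forallP hu i).
  case/forallPn: hu => i0 hi0.
  by rewrite (@prod0 _ _ _ i0) ?mul0r // avar_out.
- move=> H.
  have [t0 ht0] := ex_tuple R he.
  have [u0 hu0] := ex_tuple R he'.
  have S0 : \sum_i tvec R l1 l2 n2 (t0 i) = basevec R l1 l2 n2 0 := sum_cond ht0 inv_e.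
  have S0' : \sum_i tvec R l1 l2 n2 (u0 i) = basevec R l1 l2 n2 2 := sum_cond hu0 inv_e'.
  pose c := fun t : {ffun 'I_p -> V} => ((t == t0)%:R + (t == svt t0)%:R : complex R).
  pose d := fun u : {ffun 'I_p -> V} => ((u == u0)%:R : complex R).
  have csym : forall t : {ffun 'I_p -> V}, c [ffun i => sv (t i)] = c t.
    move=> t; rewrite /c -/(svt t) (inj_eq (can_inj (@svtK p))) (inv_eq (@svtK p)) addrC //.
  have Fsum : forall x, \sum_(t : {ffun 'I_p -> V}) (\prod_i avar x (t i)) * c t = f x.
    move=> x; rewrite /f /c; under eq_bigr do rewrite mulrDr.
    rewrite big_split /= !sum_delta !ht0; congr (_ + _).
    by apply: eq_bigr => i _; rewrite avar_g3 ffunE.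
  exists (Pf l1 l2 n2 c d); split; [|split].
  + move=> g k ks hg _ _; exact: Pf_inv.
  + move=> k ks _ _ hne; rewrite /Pf; case: eqP => [hk'|] //; by exfalso; apply: hne.
  + move=> x; split.
    * rewrite -Fsum /Psum; apply: eq_bigr => t _; congr (_ * _).
      rewrite /Pf.
      have -> : Wf l1 l2 n2 c d (fun i => dot (basevec R l1 l2 n2 0) (tvec R l1 l2 n2 (t i)))
                  (fun i => crs (basevec R l1 l2 n2 0) (tvec R l1 l2 n2 (t i))) = c t.
        rewrite -(Wq d hn hl1 hnl hll csym t); apply: Wf_ext => i; [exact: dot_q1 | exact: crs_q1].
      case: eqP => // hne; rewrite /c.
      case: eqP => [ht|_]; first by exfalso; apply: hne; rewrite ht S0.
      case: eqP => [ht|_]; first by exfalso; apply: hne; rewrite ht (sum_sv S0).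
      by rewrite addr0.
    * pose cd := fun u : {ffun 'I_p -> V} => if [forall i, inD (u i)] then c (Psi u) else d u.
      have SG : forall u : {ffun 'I_p -> V}, (forall i, inD (u i)) ->
          \sum_i tvec R l1 l2 n2 (u i) = (\sum_i tvec R l1 l2 n2 (Psi u i)) *m Gm R l1 l2 n2.
        move=> u hu; rewrite mulmx_suml; apply: eq_bigr => i _; by rewrite ffunE (tvecG hl1 hK).
      have Pp : forall u : {ffun 'I_p -> V}, Pf l1 l2 n2 c d (basevec R l1 l2 n2 2) (fun i => tvec R l1 l2 n2 (u i)) = cd u.
        move=> u; rewrite /Pf.
        have -> : Wf l1 l2 n2 c d (fun i => dot (basevec R l1 l2 n2 2) (tvec R l1 l2 n2 (u i)))
                    (fun i => crs (basevec R l1 l2 n2 2) (tvec R l1 l2 n2 (u i))) = cd u.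
          rewrite /cd; case: ifP => hu.
            have hu' : forall i, inD (u i) by exact/forallP.
            rewrite -(Wp_in d hn hl2 hl1 hnl hll hK h3 h2 csym hu').
            by apply: Wf_ext => i; [exact: dot_p1 | exact: crs_p1].
          rewrite -(Wp_out c d hn hl2 hl1 hnl hll hK h3 h2 (negbT hu)).
          by apply: Wf_ext => i; [exact: dot_p1 | exact: crs_p1].
        case: eqP => // hne; rewrite /cd; case: ifP => hu.
          have hu' : forall i, inD (u i) by exact/forallP.
          rewrite /c; case: eqP => [ht|_].
            by exfalso; apply: hne; rewrite (SG u hu') ht S0 (q1G l2 n2 hl1).
          case: eqP => [ht|_]; last by rewrite addr0.
          by exfalso; apply: hne; rewrite (SG u hu') ht (sum_sv S0) (q1G l2 n2 hl1).
        rewrite /d; case: eqP => [ht|_] //; exfalso; apply: hne; by rewrite ht S0'.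
      rewrite /Psum (eq_bigr (fun u : {ffun 'I_p -> V} => (\prod_i avar x (u i)) * cd u)); last by move=> u _; rewrite Pp.
      set x' := vec6 (x 0) (x 1) (x 2) 0 0 (x 5).
      have hx' : forall u : {ffun 'I_p -> V}, \prod_i avar x' (u i) =
          if [forall i, inD (u i)] then \prod_i avar x (u i) else 0.
        move=> u; case: ifP => hu.
          have hu' : forall i, inD (u i) by exact/forallP.
          by apply: eq_bigr => i _; rewrite avar_vec6D hu'.
        case/forallPn: (negbT hu) => i0 hi0; apply: (@prod0 _ _ _ i0); by rewrite avar_vec6D (negbTE hi0).
      have E1 : forall u : {ffun 'I_p -> V}, (\prod_i avar x (u i)) * cd u =
          (\prod_i avar x (u i)) * d u + (\prod_i avar x' (u i)) * (c (Psi u) - d u).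
        by move=> u; rewrite hx' /cd; case: ifP => _; ring.
      have E2 : \sum_(u : {ffun 'I_p -> V}) (\prod_i avar x' (u i)) * (c (Psi u) - d u) =
          f (vec6 (x 2) (x 5)^* 0 (x 0) (x 1) 0) - h x'.
        rewrite (eq_bigr (fun u : {ffun 'I_p -> V} => (\prod_i avar x' (u i)) * c (Psi u) - (\prod_i avar x' (u i)) * d u));
          last by move=> u _; rewrite mulrBr.
        rewrite sumrB; congr (_ - _); last by rewrite sum_delta -hu0.
        rewrite -Fsum [in RHS](reindex_inj (@Psi_inj p)); apply: eq_bigr => u _; congr (_ * _).
        by apply: eq_bigr => i _; rewrite ffunE avar_psi conjCK.
      rewrite (eq_bigr _ (fun u _ => E1 u)) big_split /= E2 sum_delta -hu0.
      have := H (x 2) (x 5)^* (x 0) (x 1); rewrite conjCK => ->.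
      by rewrite subrr addr0.
Qed.
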